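(* Let $K$ be a complete discretely valued field with ring of integers $\mathcal{O}_K$. Let $F\in\mathcal{O}_K[x,y]$ be homogeneous of degree $n$ with $F(x,1)$ monic, let $L$ be the splitting field of $F(x,1)$ over $K$ with normalized valuation $v$, and let $\alpha_1,\dots,\alpha_n$ be the roots of $F(x,1)$ in $L$. Let $h\in\mathcal{O}_K$ with $v(h)>0$. Let $(a,b),(a',b')\in\mathcal{O}_K^2$ be primitive solutions of $F(x,y)=h$ (i.e. $a\mathcal{O}_K+b\mathcal{O}_K=a'\mathcal{O}_K+b'\mathcal{O}_K=\mathcal{O}_K$). Suppose that for some index $i$, $v(a-\alpha_ib)=\max_j v(a-\alpha_jb)$ and $v(a'-\alpha_ib')=\max_j v(a'-\alpha_jb')$. Then $v(a-\alpha_ib)=v(a'-\alpha_ib')$. *)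

(* Defs.v *)
From HB Require Import structures.
From mathcomp Require Import all_boot all_order all_algebra all_field.
From mathcomp Require Import constructive_ereal.
Set Implicit Arguments. Unset Strict Implicit. Unset Printing Implicit Defensive.
Import Order.TTheory GRing.Theory Num.Theory.
Local Open Scope ring_scope.
Local Open Scope ereal_scope.

Definition normalized_discrete_valuation (R : fieldType) (v : R -> \bar int) : Prop :=
  [/\ forall x, v x = +oo <-> x = 0%R,
      forall x y, v (x * y)%R = v x + v y,
      forall x y, mine (v x) (v y) <= v (x + y)%R
    & forall m : int, exists x, v x = m%:E ].

Definition v_complete (R : fieldType) (v : R -> \bar int) : Prop :=
  forall u : nat -> R,
    (forall N : int, exists m : nat, forall p q : nat,
        (m <= p)%N -> (m <= q)%N -> N%:E <= v (u p - u q)%R) ->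
    exists l : R, forall N : int, exists m : nat, forall p : nat,
        (m <= p)%N -> N%:E <= v (u p - l)%R.

Definition in_OK (R : fieldType) (v : R -> \bar int) (x : R) : Prop := 0 <= v x.

Definition primitive_pair (R : fieldType) (v : R -> \bar int) (a b : R) : Prop :=
  in_OK v a /\ in_OK v b /\
  exists u w : R, in_OK v u /\ in_OK v w /\ (u * a + w * b)%R = 1%R.

(* The binary form of degree n whose dehomogenization F(x,1) is f:
   F(a,b) = \sum_{k <= n} f_k a^k b^(n-k). *)
Definition form_eval (R : ringType) (n : nat) (f : {poly R}) (a b : R) : R :=
  (\sum_(k < n.+1) f`_k * a ^+ k * b ^+ (n - k))%R.

(* Main.v *)
Require Import Defs.
From HB Require Import structures.
From mathcomp Require Import all_boot all_order all_algebra all_field.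
From mathcomp Require Import constructive_ereal.
From mathcomp Require Import zify.
Import Order.TTheory GRing.Theory Num.Theory.
Local Open Scope ring_scope.
Local Open Scope ereal_scope.

Section Val.
Variables (R : fieldType) (v : R -> \bar int) (Hv : normalized_discrete_valuation v).

Lemma v0 : v 0%R = +oo.
Proof. by case: Hv => H _ _ _; apply/(proj2 (H _)). Qed.

Lemma vM x y : v (x * y)%R = v x + v y.
Proof. by case: Hv. Qed.

Lemma vD x y : mine (v x) (v y) <= v (x + y)%R.
Proof. by case: Hv. Qed.

Lemma vnoo x : v x = +oo -> x = 0%R.
Proof. by case: Hv => H _ _ _; apply/(proj1 (H _)). Qed.

Lemma v1 : v 1%R = 0.
Proof.
have e := vM 1 1; rewrite mulr1 in e.
case E: (v 1%R) e => [r| |] e.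
- move: e; rewrite -EFinD => -[] H; have -> : r = 0%R by lia. by [].
- by move: (vnoo _ E) => /eqP; rewrite oner_eq0.
- case: Hv => _ _ _ /(_ 0%R) [x]; rewrite -(mulr1 x) vM E.
  by case: (v x).
Qed.

Lemma vfin x : x != 0%R -> exists r : int, v x = r%:E.
Proof.
move=> x0; case E: (v x) => [r| |]; first by exists r.
- by move: (vnoo _ E) => /eqP; rewrite (negbTE x0).
- have := v1; rewrite -(mulfV x0) vM E //.
Qed.

Lemma vN1 : v (-1)%R = 0.
Proof.
have n1 : (-1 : R)%R != 0%R by rewrite oppr_eq0 oner_eq0.
have [r e] := vfin _ n1.
have e2 : ((-1) * (-1) = (1:R))%R by rewrite mulrNN mulr1.
have := v1; rewrite -{1}e2 vM e -EFinD => -[] H.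
have -> : r = 0%R by lia. by [].
Qed.

Lemma vN x : v (- x)%R = v x.
Proof. by rewrite -mulN1r vM vN1 add0e. Qed.

Lemma vstrict x y : v x < v y -> v (x + y)%R = v x.
Proof.
move=> lt; apply/eqP; rewrite eq_le; apply/andP; split; last first.
  by have := vD x y; rewrite /Order.min lt.
have := vD (x + y)%R (- y)%R; rewrite addrK vN ge_min => /orP[] // H.
by have := lt_le_trans lt H; rewrite ltxx.
Qed.

Lemma v_sum_gt0 (I : Type) (s : seq I) (P : pred I) (F : I -> R) :
  (forall i, P i -> 0 < v (F i)) -> 0 < v (\sum_(i <- s | P i) F i)%R.
Proof.
move=> H; apply: (big_ind (fun x => 0 < v x)) => //; first by rewrite v0.
move=> x y hx hy; apply: (lt_le_trans _ (vD x y)).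
by rewrite lt_min hx hy.
Qed.

Lemma v_prod (I : Type) (s : seq I) (P : pred I) (F : I -> R) :
  v (\prod_(i <- s | P i) F i)%R = \sum_(i <- s | P i) v (F i).
Proof. by apply: (big_morph v vM v1). Qed.

Lemma vX_ge0 x k : 0 <= v x -> 0 <= v (x ^+ k)%R.
Proof.
move=> hx; elim: k => [|k IH]; first by rewrite expr0 v1.
by rewrite exprS vM; apply: adde_ge0.
Qed.

Lemma vX_0 x k : v x = 0 -> v (x ^+ k)%R = 0.
Proof.
move=> hx; elim: k => [|k IH]; first by rewrite expr0 v1.
by rewrite exprS vM hx IH adde0.
Qed.

Lemma add_ge0_gt0 (a b : \bar int) : 0 <= a -> 0 < b -> 0 < a + b.
Proof. by move=> ha hb; rewrite addeC -[0](adde0 0); apply: lte_leD. Qed.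

Lemma vrel di dj c : v dj <= v di -> (dj - di)%R = c -> v dj = mine (v di) (v c).
Proof.
move=> le <-.
have [lt|eq] := ltP (v dj) (v di).
- rewrite vstrict ?vN //.
  by rewrite (min_idPr (ltW lt)).
- have e : v dj = v di by apply/eqP; rewrite eq_le le.
  have := vD dj (- di)%R; rewrite vN e minxx => H.
  by rewrite (min_idPl H).
Qed.

End Val.
Arguments v0 {R v}.
Arguments vM {R v}.
Arguments vD {R v}.
Arguments vnoo {R v}.
Arguments v1 {R v}.
Arguments vfin {R v}.
Arguments vN1 {R v}.
Arguments vN {R v}.
Arguments vstrict {R v}.
Arguments v_sum_gt0 {R v}.
Arguments v_prod {R v}.
Arguments vX_ge0 {R v}.
Arguments vX_0 {R v}.
Arguments vrel {R v}.

Definition mm (M : int) (x : \bar int) : int := if x is r%:E then Order.min M r else M.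

Lemma mmE M x : x != -oo -> mine M%:E x = (mm M x)%:E.
Proof.
case: x => [r| |] //= _.
  rewrite /Order.min lte_fin; by case: ifP.
by rewrite (min_idPl (leey _)).
Qed.

Lemma mm_mono M M' x : (M <= M')%R -> (mm M x <= mm M' x)%R.
Proof. by case: x => [r| |] //= H; apply: le_min2. Qed.

Lemma keyl n (i : 'I_n) (c : 'I_n -> \bar int) (M M' : int) :
  (forall j, c j != -oo) ->
  M%:E + \sum_(j < n | j != i) mine M%:E (c j) =
  M'%:E + \sum_(j < n | j != i) mine M'%:E (c j) -> M = M'.
Proof.
move=> hc.
rewrite (eq_bigr (fun j => (mm M (c j))%:E)); last by move=> j _; rewrite mmE.
rewrite [X in _ = _ + X](eq_bigr (fun j => (mm M' (c j))%:E)); last by move=> j _; rewrite mmE.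
rewrite !sumEFin -!EFinD => -[] E.
have mono : forall A B, (A < B)%R ->
    (A + \sum_(j < n | j != i) mm A (c j) < B + \sum_(j < n | j != i) mm B (c j))%R.
  move=> A B lt; apply: ltr_leD => //; apply: ler_sum => j _.
  exact/mm_mono/ltW.
have [lt|lt|//] := ltgtP M M'.
- by have := mono _ _ lt; rewrite E ltxx.
- by have := mono _ _ lt; rewrite E ltxx.
Qed.

From mathcomp Require Import ring.

Lemma form_prod (K : fieldType) (L : fieldExtType K) n (f : {poly K})
  (Hfsz : size f = n.+1) (alpha : 'I_n -> L)
  (Halpha : map_poly (in_alg L) f = (\prod_(j < n) ('X - (alpha j)%:P))%R)
  (a b : K) (hb : (b%:A : L) != 0%R) :
  ((form_eval n f a b)%:A = \prod_(j < n) (a%:A - alpha j * b%:A) :> L)%R.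
Proof.
set x : L := (a%:A)%R; set y : L := (b%:A)%R.
have -> : (\prod_(j < n) (x - alpha j * y) = y ^+ n * (map_poly (in_alg L) f).[x / y])%R.
  have -> : (y ^+ n = \prod_(j < n) y)%R by rewrite prodr_const card_ord.
  rewrite Halpha horner_prod -big_split /=.
  apply: eq_bigr => j _; rewrite hornerXsubC. field. exact: hb.
rewrite (horner_coef_wide (n := n.+1)); last by rewrite size_map_poly Hfsz.
rewrite /form_eval -in_algE rmorph_sum mulr_sumr; apply: eq_bigr => k _.
rewrite coef_map /= -in_algE !rmorphM !rmorphXn /= -/x -/y.
rewrite expr_div_n exprB; last 2 first.
- by rewrite -ltnS.
- by rewrite unitfE.
field. by rewrite expf_neq0.
Qed.

Lemma b_unit (K : fieldType) (vK : K -> \bar int)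
  (HvK : normalized_discrete_valuation vK) n (f : {poly K})
  (Hfmon : f \is monic) (Hfsz : size f = n.+1)
  (HfO : forall k : nat, in_OK vK f`_k) (a b : K)
  (Hab : primitive_pair vK a b) (hb : 0 < vK b) :
  vK (form_eval n f a b) = 0.
Proof.
case: Hab => ha [_ [u [w [hu [hw e]]]]].
have va : vK a = 0.
  apply/eqP; rewrite eq_le ha andbT leNgt; apply/negP => pa.
  have := vD HvK (u * a)%R (w * b)%R; rewrite e v1 // !vM // lt_geF //.
  by rewrite lt_min; rewrite /in_OK in hu hw; apply/andP; split; apply: add_ge0_gt0.
have fn : (f`_n = 1)%R by move/monicP: Hfmon; rewrite /lead_coef Hfsz.
rewrite /form_eval big_ord_recr /= subnn expr0 mulr1 fn mul1r addrC.
rewrite vstrict // vX_0 //.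
apply: v_sum_gt0 => // k _.
have -> : (n - k = (n - k.+1).+1)%N by rewrite subnSK.
rewrite exprS !vM //; apply: add_ge0_gt0.
  by apply: adde_ge0; [exact: HfO | exact: vX_ge0].
by rewrite addeC; apply: add_ge0_gt0 => //; apply: vX_ge0 => //; exact: ltW.
Qed.

Lemma pair_sum (L : fieldType) (v : L -> \bar int) (Hv : normalized_discrete_valuation v)
  n (alpha : 'I_n -> L) (i : 'I_n) (x y : L) (hy : v y = 0)
  (Hmax : forall j, v (x - alpha j * y)%R <= v (x - alpha i * y)%R) :
  v (\prod_(j < n) (x - alpha j * y))%R = v (x - alpha i * y)%R +
    \sum_(j < n | j != i) mine (v (x - alpha i * y)%R) (v (alpha i - alpha j)%R).
Proof.
rewrite v_prod // (bigD1 i) //=; congr (_ + _); apply: eq_bigr => j _.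
rewrite (vrel Hv _ _ _ (Hmax j) (erefl _)).
have -> : ((x - alpha j * y) - (x - alpha i * y) = (alpha i - alpha j) * y)%R by ring.
by rewrite vM // hy adde0.
Qed.

Lemma prod_zero (L : fieldType) (v : L -> \bar int) (Hv : normalized_discrete_valuation v)
  n (alpha : 'I_n -> L) (i : 'I_n) (x y : L)
  (Hmax : forall j, v (x - alpha j * y)%R <= v (x - alpha i * y)%R) :
  (\prod_(j < n) (x - alpha j * y))%R = 0%R -> v (x - alpha i * y)%R = +oo.
Proof.
move/eqP/prodf_eq0 => [j _ /eqP hj].
by have := Hmax j; rewrite hj v0 // leye_eq => /eqP.
Qed.

Lemma prod_nz (L : fieldType) (v : L -> \bar int) (Hv : normalized_discrete_valuation v)
  n (alpha : 'I_n -> L) (i : 'I_n) (x y : L) :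
  (\prod_(j < n) (x - alpha j * y))%R != 0%R -> exists M : int, v (x - alpha i * y)%R = M%:E.
Proof.
move=> h; apply: vfin => //; apply/eqP => e; move/negP: h; apply.
by apply/prodf_eq0; exists i => //; rewrite e.
Qed.

Theorem lemma2p3
  (K : fieldType) (vK : K -> \bar int)
  (HvK : normalized_discrete_valuation vK) (HKc : v_complete vK)
  (n : nat) (f : {poly K})
  (Hfmon : f \is monic) (Hfsz : size f = n.+1)
  (HfO : forall k : nat, in_OK vK f`_k)
  (L : fieldExtType K)
  (HL : splittingFieldFor 1%VS (map_poly (in_alg L) f) fullv)
  (v : L -> \bar int) (Hv : normalized_discrete_valuation v)
  (Hext : exists e : nat, (0 < e)%N /\ forall x : K, v (x%:A)%R = (e%:Z)%:E * vK x)
  (alpha : 'I_n -> L)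
  (Halpha : map_poly (in_alg L) f = (\prod_(j < n) ('X - (alpha j)%:P))%R)
  (h : K) (HhO : in_OK vK h) (Hh : 0 < v (h%:A)%R)
  (a b a' b' : K)
  (Hab : primitive_pair vK a b) (Hab' : primitive_pair vK a' b')
  (Hsol : form_eval n f a b = h) (Hsol' : form_eval n f a' b' = h)
  (i : 'I_n)
  (Hmax : forall j : 'I_n, v (a%:A - alpha j * b%:A)%R <= v (a%:A - alpha i * b%:A)%R)
  (Hmax' : forall j : 'I_n, v (a'%:A - alpha j * b'%:A)%R <= v (a'%:A - alpha i * b'%:A)%R) :
  v (a%:A - alpha i * b%:A)%R = v (a'%:A - alpha i * b'%:A)%R.
Proof.
case: Hext => e [e0 He].
have vb : forall a b : K, primitive_pair vK a b -> form_eval n f a b = h -> v (b%:A)%R = 0.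
  move=> a0 b0 Hp Hs; rewrite He.
  have [lt|] := ltP 0 (vK b0).
    have := b_unit _ _ HvK _ _ Hfmon Hfsz HfO _ _ Hp lt; rewrite Hs => hz.
    by move: Hh; rewrite He hz mule0 ltxx.
  case: Hp => _ [hb _] le.
  have -> : vK b0 = 0 by apply/eqP; rewrite eq_le le hb.
  by rewrite mule0.
have ynz : forall a b : K, primitive_pair vK a b -> form_eval n f a b = h -> (b%:A : L)%R != 0%R.
  move=> a0 b0 Hp Hs; apply/eqP => z; have := vb _ _ Hp Hs; rewrite z v0 //.
have P1 := form_prod _ _ _ _ Hfsz _ Halpha a _ (ynz _ _ Hab Hsol); rewrite Hsol in P1.
have P2 := form_prod _ _ _ _ Hfsz _ Halpha a' _ (ynz _ _ Hab' Hsol'); rewrite Hsol' in P2.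
have [hz|hnz] := eqVneq (h%:A : L)%R 0%R.
  rewrite (prod_zero _ _ Hv _ _ _ _ _ Hmax) -?P1 // (prod_zero _ _ Hv _ _ _ _ _ Hmax') -?P2 //.
have n1 : (\prod_(j < n) (a%:A - alpha j * b%:A) != 0 :> L)%R by rewrite -P1.
have n2 : (\prod_(j < n) (a'%:A - alpha j * b'%:A) != 0 :> L)%R by rewrite -P2.
have [M hM] := prod_nz _ _ Hv _ _ i _ _ n1.
have [M' hM'] := prod_nz _ _ Hv _ _ i _ _ n2.
have E1 := pair_sum _ _ Hv _ _ _ _ _ (vb _ _ Hab Hsol) Hmax; rewrite -P1 hM in E1.
have E2 := pair_sum _ _ Hv _ _ _ _ _ (vb _ _ Hab' Hsol') Hmax'; rewrite -P2 hM' in E2.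
rewrite hM hM'; congr (_%:E); apply: (keyl _ i (fun j => v (alpha i - alpha j)%R)).
  move=> j; have [z|nz] := eqVneq (alpha i - alpha j)%R 0%R; first by rewrite z v0.
  by have [r ->] := vfin Hv _ nz.
by rewrite -E1 -E2.
Qed.
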